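(* Let $G$ be a $6$-regular graph, $\mathcal S$ a canonical path partition of $G$, and $P$ a path component with end-vertices $o_1,o_2$. Let $x_1,x_2\in V_2$ be path neighbors on $P$, with $x_1$ immediately preceding $x_2$ when $P$ is traversed from $o_1$ to $o_2$, and suppose $x_1$ goes to $o_1$ and $x_2$ goes to $o_2$. Then no vertex of $P$ lying strictly between $o_1$ and $x_1$, and no vertex of $P$ lying strictly between $x_2$ and $o_2$, is heavy.
   Context: All graphs are finite, simple and undirected. A path partition of $G=(V,E)$ is a set of vertex-disjoint paths (single vertices allowed) covering $V$; its members are components. A component with $t\ge3$ vertices is a cycle component if the subgraph induced on its vertex set has a spanning cycle; a one-vertex component is an isolated vertex; every other component is a path component. A path partition is canonical if (1) it has the minimum number of components among all path partitions of $G$; (2) among those, it has the maximum number of cycle components; (3) it has no isolated vertices. Given a canonical path partition $\mathcal S$ of $G$: two vertices are path neighbors if they are consecutive on a path component. An edge of $G$ is a free edge unless it joins two path neighbors or has both endpoints in the same cycle component. $V_1$ is the set of end-vertices of path components together with all vertices of cycle components. $V_2$ is the set of vertices not in $V_1$ that are joined by a free edge to a vertex of $V_1$. A balanced edge is a free edge with one endpoint in $V_1$ and the other in $V_2$; for $x\in V_2$, $y\in V_1$ we say $x$ goes to $y$ if $xy$ is a balanced edge. A vertex of $V_2$ is heavy if it is incident to at least three balanced edges whose other endpoints are end-vertices of path components. *)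

(* Defs.v *)
From mathcomp Require Import all_boot.
Set Implicit Arguments. Unset Strict Implicit. Unset Printing Implicit Defensive.

Definition simple_graph (T : finType) (e : rel T) : Prop :=
  symmetric e /\ irreflexive e.

Definition regular (T : finType) (e : rel T) (k : nat) : Prop :=
  forall v : T, #|[set w | e v w]| = k.

Definition gpath (T : finType) (e : rel T) (p : seq T) : bool :=
  if p is x :: s then path e x s else false.

Definition path_partition (T : finType) (e : rel T) (S : seq (seq T)) : Prop :=
  all (gpath e) S /\ perm_eq (flatten S) (enum T).

(* Cycle component: at least 3 vertices and the induced subgraph on its vertex
   set has a spanning cycle (some ordering of the vertices is an e-cycle). *)
Definition cycle_comp (T : finType) (e : rel T) (p : seq T) : bool :=
  (2 < size p) && has (cycle e) (permutations p).

Definition isolated_comp (T : finType) (p : seq T) : bool := size p == 1.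

Definition path_comp (T : finType) (e : rel T) (p : seq T) : bool :=
  ~~ cycle_comp e p && ~~ isolated_comp p.

Definition canonical (T : finType) (e : rel T) (S : seq (seq T)) : Prop :=
  [/\ path_partition e S,
      (forall S', path_partition e S' -> size S <= size S'),
      (forall S', path_partition e S' -> size S' = size S ->
         count (cycle_comp e) S' <= count (cycle_comp e) S)
    & ~~ has (@isolated_comp T) S].

Fixpoint adj_in (T : eqType) (x y : T) (p : seq T) : bool :=
  match p with
  | a :: ((b :: _) as q) => ((a == x) && (b == y)) || adj_in x y q
  | _ => false
  end.

Definition path_nbrs (T : finType) (e : rel T) (S : seq (seq T)) (x y : T) : bool :=
  has (fun p => path_comp e p && (adj_in x y p || adj_in y x p)) S.

Definition same_cycle_comp (T : finType) (e : rel T) (S : seq (seq T)) (x y : T) : bool :=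
  has (fun p => cycle_comp e p && (x \in p) && (y \in p)) S.

Definition free_edge (T : finType) (e : rel T) (S : seq (seq T)) (x y : T) : bool :=
  [&& e x y, ~~ path_nbrs e S x y & ~~ same_cycle_comp e S x y].

Definition end_vertex (T : finType) (e : rel T) (S : seq (seq T)) (x : T) : bool :=
  has (fun p => path_comp e p && ((x == head x p) || (x == last x p))) S.

Definition inV1 (T : finType) (e : rel T) (S : seq (seq T)) (x : T) : bool :=
  end_vertex e S x || has (fun p => cycle_comp e p && (x \in p)) S.

Definition inV2 (T : finType) (e : rel T) (S : seq (seq T)) (x : T) : bool :=
  ~~ inV1 e S x && [exists y, inV1 e S y && free_edge e S x y].

Definition balanced (T : finType) (e : rel T) (S : seq (seq T)) (x y : T) : bool :=
  free_edge e S x y &&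
  ((inV1 e S x && inV2 e S y) || (inV2 e S x && inV1 e S y)).

Definition goes_to (T : finType) (e : rel T) (S : seq (seq T)) (x y : T) : bool :=
  [&& inV2 e S x, inV1 e S y & balanced e S x y].

Definition heavy (T : finType) (e : rel T) (S : seq (seq T)) (x : T) : bool :=
  inV2 e S x &&
  (3 <= #|[set y | balanced e S x y && end_vertex e S y]|).

(* Main.v *)
Require Import Defs.
From mathcomp Require Import all_boot zify.
Set Implicit Arguments. Unset Strict Implicit. Unset Printing Implicit Defensive.

Lemma mem_rem_neq (U : eqType) (x y : U) (s : seq U) : x != y -> x \in s -> x \in rem y s.
Proof.
move=> nxy; elim: s => //= a s IH; rewrite in_cons; case/orP => [/eqP xa | xs].
  by subst a; rewrite (negbTE nxy) in_cons eqxx.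
by case: ifP => _; [exact xs | rewrite in_cons IH ?orbT].
Qed.

Section Helpers.
Variables (T : finType) (e : rel T).

Lemma adj_in_split (x y : T) p : adj_in x y p -> exists L R, p = L ++ x :: y :: R.
Proof.
elim: p => [|a p IH] //=.
case: p IH => [|b q] IH //= /orP[/andP[/eqP-> /eqP->]|H].
  by exists [::], q.
have [L [R ->]] := IH H. by exists (a :: L), R.
Qed.

Lemma adj_in_cat (x y : T) L s : adj_in x y s -> adj_in x y (L ++ s).
Proof.
elim: L => [|a L IH] //= H.
have := IH H. case: (L ++ s) => [|b q] //= ->. by rewrite orbT.
Qed.

Lemma gpath_of_path a s : path e a s -> s != [::] -> gpath e s.
Proof. by case: s => //= b s /andP[_ ->]. Qed.

Lemma idx_split A (v : T) B : uniq (A ++ v :: B) -> index v (A ++ v :: B) = size A.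
Proof.
rewrite cat_uniq => /and3P[_ H _].
rewrite index_cat; case: ifP => vA; last by rewrite /= eqxx addn0.
by case/negP: H; apply/hasP; exists v => //; rewrite in_cons eqxx.
Qed.

Lemma canon_facts S P : canonical e S -> P \in S ->
  uniq (P ++ flatten (rem P S)).
Proof.
case=> [[_ pf] _ _ _] PS.
have := perm_flatten (perm_to_rem PS) => /= H.
by rewrite -(perm_uniq H) (perm_uniq pf) enum_uniq.
Qed.

Lemma endv_in S P (y : T) : canonical e S -> P \in S -> end_vertex e S y ->
  y \in P -> (y == head y P) || (y == last y P).
Proof.
move=> cS PS /hasP[Q QS /andP[_ hl]] yP.
have [[ag _] _ _ _] := cS.
have gQ := allP ag Q QS.
have yQ : y \in Q.
  case: Q QS gQ hl => [|q qs] //= _ _ /orP[/eqP->|/eqP->]; first by rewrite in_cons eqxx.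
  by rewrite mem_last.
case: (eqVneq Q P) => [<- //|nQP].
have := canon_facts cS PS; rewrite cat_uniq => /and3P[_ /hasP H _].
case: H; exists y => //. apply/flattenP; exists Q => //. exact: mem_rem_neq.
Qed.

Lemma rev_gpath (y : T) Q : symmetric e -> gpath e Q -> (y == head y Q) || (y == last y Q) ->
  exists qs, perm_eq (y :: qs) Q /\ path e y qs.
Proof.
move=> sym; case: Q => [|q qs] //= pq /orP[/eqP->|/eqP yl].
  by exists qs.
exists (rev (belast q qs)); split.
  by rewrite -perm_rev /= rev_cons revK lastI yl.
rewrite yl rev_path.
by rewrite (eq_path (e' := e)) // => a b; rewrite sym.
Qed.

End Helpers.

Lemma key (T : finType) (e : rel T) S P C w ws (y : T) :
  symmetric e -> canonical e S -> P \in S -> path_comp e P ->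
  perm_eq P (C ++ w :: ws) -> cycle e C -> 2 < size C -> path e w ws ->
  e (last w ws) y -> y \notin P -> end_vertex e S y -> False.
Proof.
move=> sym cS PS pcP pP cC sC pW ewy yP /hasP[Q QS /andP[pcQ hl]].
have [[ag pf] minsz maxcyc noiso] := cS.
have gQ := allP ag Q QS.
have yQ : y \in Q.
  case: Q QS gQ hl {pcQ} => [|q qs] //= _ _ /orP[/eqP->|/eqP->]; first by rewrite in_cons eqxx.
  by rewrite mem_last.
have nQP : Q != P by apply/eqP => QP; move: yP; rewrite -QP yQ.
have [qs [pQ' pq]] := rev_gpath sym gQ hl.
set rest := rem Q (rem P S).
have QrP : Q \in rem P S by apply: mem_rem_neq.
have pS : perm_eq S (P :: Q :: rest).
  apply: perm_trans (perm_to_rem PS) _; by rewrite perm_cons perm_to_rem.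
set S' := C :: (w :: ws ++ y :: qs) :: rest.
have ppS' : path_partition e S'.
  split.
  - rewrite /S' /= ; apply/and3P; split.
    + have gC : forall C', cycle e C' -> 2 < size C' -> gpath e C'.
        by case=> [|c cs] //=; rewrite rcons_path => /andP[].
      exact: gC.
    + by rewrite cat_path /= ewy pW pq.
    + apply/allP => p /mem_rem /mem_rem pS0; exact: allP ag p pS0.
  - apply: perm_trans pf; rewrite perm_sym; apply: perm_trans (perm_flatten pS) _.
    rewrite /S' /= !catA.
    have -> : C ++ w :: (ws ++ y :: qs) ++ flatten rest = ((C ++ w :: ws) ++ y :: qs) ++ flatten rest by rewrite -!catA.
    by apply: perm_cat => //; apply: perm_cat => //; rewrite perm_sym.
have := maxcyc S' ppS'.
have -> : size S' = size S by rewrite (perm_size pS).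
move=> /(_ erefl).
rewrite ((permP pS) (cycle_comp e)) /S' /=.
have -> : cycle_comp e P = false by move: pcP; rewrite /path_comp; case: (cycle_comp e P).
have -> : cycle_comp e Q = false by move: pcQ; rewrite /path_comp; case: (cycle_comp e Q).
have -> : cycle_comp e C.
  rewrite /cycle_comp sC /=; apply/hasP; exists C => //; by rewrite mem_permutations.
by rewrite add1n !add0n ltnNge leq_addl.
Qed.

Lemma key2 (T : finType) (e : rel T) S P C a W (y : T) :
  symmetric e -> canonical e S -> P \in S -> path_comp e P ->
  perm_eq P (C ++ W) -> cycle e C -> 2 < size C -> path e a W -> W != [::] ->
  e (last a W) y -> y \notin P -> end_vertex e S y -> False.
Proof.
move=> sym cS PS pcP pP cC sC; case: W pP => [|w ws] //= pP /andP[_ pW] _.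
exact: key sym cS PS pcP pP cC sC pW.
Qed.

Lemma permtest (T : eqType) (o1 v x1 x2 : T) L1 L2 R :
  perm_eq (o1 :: (L1 ++ v :: L2) ++ x1 :: x2 :: R) ((x2 :: R) ++ L2 ++ x1 :: o1 :: L1 ++ [:: v]).
Proof.
apply/permP => a; rewrite /= !count_cat /=. 
rewrite !count_cat /=; lia.
Qed.

Lemma permtest2 (T : eqType) (o1 v x1 x2 : T) L' R1 R2 :
  perm_eq (o1 :: L' ++ x1 :: x2 :: R1 ++ v :: R2) ((o1 :: L' ++ [:: x1]) ++ R2 ++ x2 :: R1 ++ [:: v]).
Proof.
apply/permP => a; rewrite /= !count_cat /= !count_cat /=; lia.
Qed.

Theorem mainTheorem12 (T : finType) (e : rel T) (S : seq (seq T))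
  (P : seq T) (o1 o2 x1 x2 : T) (mid : seq T) :
  simple_graph e -> regular e 6 -> canonical e S ->
  P \in S -> path_comp e P ->
  P = o1 :: rcons mid o2 ->
  inV2 e S x1 -> inV2 e S x2 ->
  adj_in x1 x2 P ->
  goes_to e S x1 o1 -> goes_to e S x2 o2 ->
  (forall v, v \in P -> 0 < index v P < index x1 P -> ~~ heavy e S v) /\
  (forall v, v \in P -> index x2 P < index v P < (size P).-1 -> ~~ heavy e S v).
Proof.
move=> [sym irr] reg cS PS pcP HP ix1 ix2 adj g1 g2.
have [[ag pf] _ _ _] := cS.
have uP : uniq P by have := canon_facts cS PS; rewrite cat_uniq => /andP[].
have gP := allP ag P PS.
have o1V1 : inV1 e S o1.
  by apply/orP; left; apply/hasP; exists P => //; rewrite pcP HP /= eqxx.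
have o2V1 : inV1 e S o2.
  by apply/orP; left; apply/hasP; exists P => //; rewrite pcP HP /= last_rcons eqxx orbT.
have nx1o1 : x1 != o1 by apply/eqP=> E; move: ix1; rewrite /inV2 E o1V1.
have nx2o2 : x2 != o2 by apply/eqP=> E; move: ix2; rewrite /inV2 E o2V1.
case/and3P: g1 => _ _ /andP[/and3P[e1 nb1 _] _].
case/and3P: g2 => _ _ /andP[/and3P[e2 nb2 _] _].
have nadj : forall a b, ~~ path_nbrs e S a b -> ~~ adj_in a b P && ~~ adj_in b a P.
  move=> a b nb; apply/andP; split; apply/negP => H; case/negP: nb;
   apply/hasP; exists P => //; by rewrite pcP H ?orbT.
have noheavy : forall v, heavy e S v -> exists y, [/\ e v y, y \notin P & end_vertex e S y].
  move=> v /andP[_ hc].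
  case: (boolP [exists y, [&& balanced e S v y, end_vertex e S y & y \notin P]]).
    by case/existsP => y /and3P[/andP[/and3P[evy _ _] _] ev yP]; exists y.
  rewrite negb_exists => /forallP H; exfalso.
  have : [set y | balanced e S v y && end_vertex e S y] \subset [set o1; o2].
    apply/subsetP => y; rewrite inE => /andP[b ev].
    have := H y; rewrite b ev /= negbK => yP.
    have := endv_in cS PS ev yP; rewrite HP /= last_rcons => /orP[/eqP->|/eqP->];
      by rewrite !inE eqxx ?orbT.
  move/subset_leq_card; rewrite cards2 => le.
  have := leq_trans hc le; by case: (o1 != o2).
have [L [R HLR]] := adj_in_split adj.
have lP : last o1 P = o2 by rewrite HP /= last_rcons.
have hP : head o1 P = o1 by rewrite HP.
move: (nadj _ _ nb1) (nadj _ _ nb2) => /andP[na1 na1'] /andP[na2 na2'].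
split => v vP /andP[i1 i2]; apply/negP => /noheavy [y [evy yP ey]].
- move: i1 i2 vP uP gP lP hP na2; rewrite HLR.
  case: L HLR => [|l L'] HLR i1 i2 vP uP gP lP hP na2.
    by move: i2; rewrite /= eqxx.
  move: hP => /= ? ; subst l.
  have ix : index x1 ((o1 :: L') ++ x1 :: x2 :: R) = size (o1 :: L') by rewrite idx_split.
  rewrite ix in i2.
  have vL : v \in o1 :: L'.
    move: i2; rewrite index_cat; case: ifP => // _; by rewrite ltnNge leq_addr.
  have vL' : v \in L'.
    move: vL i1; rewrite in_cons => /orP[/eqP->|//]; by rewrite /= eqxx.
  case/splitPr: vL' HLR i1 i2 vP uP gP lP na2 => L1 L2 HLR i1 i2 vP uP gP lP na2.
  move: gP => /=; rewrite -catA cat_path /= cat_path /=.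
  move/andP => [pL1 /andP[ev /andP[pL2 /andP[ex1 /andP[_ pR]]]]].
  move: lP; rewrite /= last_cat /= => lR.
  clear ix; case: R HLR i1 i2 vP uP pR lR na2 => [|r R'] HLR _ _ _ _ pR lR na2.
    by move: nx2o2; rewrite /= -lR eqxx.
  case: R' HLR pR lR na2 => [|r' R''] HLR pR lR na2.
    move: lR => /= ?; subst r.
    case/negP: na2; rewrite -cat1s catA; apply: adj_in_cat; by rewrite /= !eqxx orbT.
  apply: (key2 sym cS PS pcP (C := x2 :: [:: r, r' & R''])
           (a := v) (W := L2 ++ x1 :: o1 :: L1 ++ [:: v])) (yP) (ey).
  + by rewrite HLR permtest.
  + rewrite /= rcons_path; move: pR => /= /and3P[-> -> ->]; by move: lR => /= ->; rewrite sym.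
  + by [].
  + by rewrite cat_path /= cat_path /= pL2 ex1 e1 pL1 ev.
  + by case: (L2).
  + by rewrite last_cat /= last_cat.
- move: i1 i2 vP uP gP lP hP na1'; rewrite HLR.
  case: L HLR => [|l L'] HLR i1 i2 vP uP gP lP hP na1'.
    by move: hP => /= E; move: nx1o1; rewrite E eqxx.
  move: hP => /= ? ; subst l.
  have ix : index x2 ((o1 :: L') ++ x1 :: x2 :: R) = (size L').+2.
    have -> : (o1 :: L') ++ x1 :: x2 :: R = (o1 :: L' ++ [:: x1]) ++ x2 :: R by rewrite /= -catA.
    rewrite idx_split; first by rewrite /= size_cat addn1.
    by move: uP; rewrite /= -catA.
  rewrite ix in i1.
  have uR : uniq R by move: uP; rewrite cat_uniq => /and3P[_ _ /andP[_ /andP[]]].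
  have vR : v \in R.
    move: i1 vP; rewrite index_cat; case: ifP => vL.
      move=> H; have := index_mem v (o1 :: L'); rewrite vL => H'; have := ltn_trans H H'.
      by rewrite [size _]/= ltnS ltnNge leqW.
    move=> H; rewrite mem_cat vL /= !in_cons => /or3P[/eqP E|/eqP E|//]; subst v; exfalso; move: H.
      by rewrite [index x1 _]/= eqxx [size (o1 :: L')]/= addn0 ltnS ltnNge leqnSn.
    rewrite [index x2 _]/= eqxx [size (o1 :: L')]/=; case: (x1 == x2); rewrite ?addn0 ?addn1 ltnS ?ltnn //.
    by rewrite ltnNge leqnSn.
  case/splitPr: vR HLR i1 i2 vP uP gP lP na1' uR => R1 R2 HLR i1 i2 vP uP gP lP na1' uR.
  have : index v ((o1 :: L') ++ x1 :: x2 :: R1 ++ v :: R2) = (size L' + size R1).+3.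
    have -> : (o1 :: L') ++ x1 :: x2 :: R1 ++ v :: R2 = (o1 :: L' ++ [:: x1, x2 & R1]) ++ v :: R2 by rewrite /= -catA.
    rewrite idx_split; first by rewrite /= size_cat /= !addnS.
    by rewrite /= -catA.
  move=> iv; move: i2; rewrite iv /= size_cat /= size_cat /= => i2.
  case: R2 HLR i1 i2 vP uP gP lP na1' uR iv => [|r2 R2'] HLR _ i2 _ _ gP lP na1' _ _.
    by move: i2 => /=; move: (size L') (size R1) => n1 n2; clear; lia.
  clear ix; case: L' HLR i2 gP lP na1' => [|l' L''] HLR _ gP lP na1'.
    by case/negP: na1'; rewrite /= !eqxx.
  move: gP => /=; rewrite cat_path /= cat_path /=.
  move/andP => [e1l /andP[pL /andP[ex1 /andP[_ /andP[pR1 /andP[ev pR2]]]]]].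
  move: lP; rewrite /= last_cat /= last_cat /= => lR.
  apply: (key2 sym cS PS pcP (C := o1 :: (l' :: L'') ++ [:: x1])
           (a := v) (W := (r2 :: R2') ++ x2 :: R1 ++ [:: v])) (yP) (ey).
  + rewrite HLR; exact: permtest2.
  + rewrite /= rcons_path /= e1l /= cat_path pL /= ex1 /= last_cat /=; exact: e1.
  + by rewrite /= size_cat /= addn1.
  + rewrite cat_path /= cat_path /= ev pR2 lR pR1 /= sym e2.
  + by [].
  + by [].
  + by rewrite /= !(@last_cat T) /= cats1 last_rcons.
Qed.
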